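(* Let $\mathbb{A}$ be a reduced medial algebra of dimension at least $2$ over a field $\mathbb{K}$ of characteristic not $2,3$, and let $c_1,c_2$ be nonzero idempotents. Then $c_1c_2$ is a nonzero idempotent, and for all $\lambda_1,\lambda_2\in\mathbb{K}$, $$\mathbb{A}_{c_1}(\lambda_1)\mathbb{A}_{c_2}(\lambda_2)\subset\mathbb{A}_{c_1c_2}(\lambda_1\lambda_2),\qquad \mathbb{A}_{c_1}(\lambda_1)\mathbb{A}_{c_1}(\lambda_2)\subset\mathbb{A}_{c_1}(\lambda_1\lambda_2).$$ In particular $\sigma(c_1)\cup\sigma(c_2)\subset\sigma(c_1c_2)$, and $\dim\mathbb{A}_{c_j}(\lambda_j)\le\dim\mathbb{A}_{c_ic_j}(\lambda_j)$ for $\{i,j\}=\{1,2\}$ and all $\lambda_j\in\sigma(c_j)$.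
   Context: All algebras commutative, possibly nonassociative, finite-dimensional. Medial: $(xy)(zw)=(xz)(yw)$ identically. $L_c:x\mapsto cx$, $\mathbb{A}_c(\lambda)=\ker(L_c-\lambda\mathbf{1})$, and $\sigma(c)$ is the set of distinct eigenvalues of $L_c$. A medial algebra is reduced if $\ker L_c=0$ for every nonzero idempotent $c$. *)

(* Defs.v *)
From HB Require Import structures.
From mathcomp Require Import all_boot all_order all_algebra.
Set Implicit Arguments. Unset Strict Implicit. Unset Printing Implicit Defensive.
Import Order.TTheory GRing.Theory Num.Theory.
Local Open Scope ring_scope.

(* A commutative, possibly nonassociative, finite-dimensional algebra over a
   field F is modelled as a vectType V over F (finite-dimensional vector space)
   together with a multiplication mul : V -> V -> V which is commutative and
   linear in its second argument (hence bilinear). *)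

Definition comm_bilinear (F : fieldType) (V : vectType F) (mul : V -> V -> V) :=
  (forall x y, mul x y = mul y x) /\ (forall x, linear (mul x)).

Definition medial (F : fieldType) (V : vectType F) (mul : V -> V -> V) :=
  forall x y z w, mul (mul x y) (mul z w) = mul (mul x z) (mul y w).

Definition is_idem (F : fieldType) (V : vectType F) (mul : V -> V -> V) (c : V) :=
  mul c c = c.

Definition Lmul (F : fieldType) (V : vectType F) (mul : V -> V -> V) (c : V)
  : 'End(V) := linfun (mul c).

Definition reduced (F : fieldType) (V : vectType F) (mul : V -> V -> V) :=
  forall c : V, c != 0 -> is_idem mul c -> lker (Lmul mul c) = 0%VS.

Definition eigsp (F : fieldType) (V : vectType F) (mul : V -> V -> V) (c : V)
  (l : F) : {vspace V} := passmx.leigenspace (Lmul mul c) l.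

Definition in_spec (F : fieldType) (V : vectType F) (mul : V -> V -> V) (c : V)
  (l : F) : bool := passmx.leigenvalue (Lmul mul c) l.

(* Main.v *)
Require Import Defs.
From HB Require Import structures.
From mathcomp Require Import all_boot all_order all_algebra.
Import Order.TTheory GRing.Theory Num.Theory.
Local Open Scope ring_scope.

Section Helpers.
Variables (F : fieldType) (V : vectType F) (mul : V -> V -> V).
Hypothesis Halg : comm_bilinear mul.

Definition linpack (c : V) : {linear V -> V} :=
  HB.pack (mul c) (GRing.isLinear.Build _ _ _ _ (mul c) (Halg.2 c)).

Lemma LmulE c x : Lmul mul c x = mul c x.
Proof. exact: (lfunE (linpack c) x). Qed.

Lemma mul0r' c : mul c 0 = 0.
Proof. exact: (raddf0 (linpack c)). Qed.

Lemma mulZr c k x : mul c (k *: x) = k *: mul c x.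
Proof. by have := Halg.2 c k x 0; rewrite !addr0 mul0r' addr0. Qed.

Lemma mulZl c k x : mul (k *: x) c = k *: mul x c.
Proof. by rewrite Halg.1 mulZr Halg.1. Qed.

Lemma eigP c l v : (v \in eigsp mul c l) = (mul c v == l *: v).
Proof.
rewrite /eigsp /passmx.leigenspace memv_ker add_lfunE opp_lfunE scale_lfunE.
by rewrite id_lfunE LmulE subr_eq0.
Qed.

Hypothesis Hmed : medial mul.

Lemma eig_prod a b l1 l2 x y : x \in eigsp mul a l1 -> y \in eigsp mul b l2 ->
  mul x y \in eigsp mul (mul a b) (l1 * l2).
Proof.
rewrite !eigP => /eqP Hx /eqP Hy.
by rewrite Hmed Hx Hy mulZl mulZr scalerA.
Qed.

Lemma idem_eig c : is_idem mul c -> c \in eigsp mul c 1.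
Proof. by rewrite eigP scale1r => ->. Qed.

Lemma specP c l : reflect (exists2 v, v != 0 & v \in eigsp mul c l) (in_spec mul c l).
Proof.
rewrite /in_spec /passmx.leigenvalue -/(eigsp mul c l).
apply: (iffP idP).
  by move=> H; exists (vpick (eigsp mul c l)); [rewrite vpick0 | exact: memv_pick].
move=> [v Hv Hm]; apply/negP => /eqP H0; move: Hm; rewrite H0 memv0.
by rewrite (negPf Hv).
Qed.

Hypothesis Hred : reduced mul.

Lemma mul_nz c v : c != 0 -> is_idem mul c -> v != 0 -> mul c v != 0.
Proof.
move=> Hc Hi Hv; apply/negP => /eqP H0.
have := Hred _ Hc Hi => /eqP /lker0P Hinj.
move/negP: Hv; apply; apply/eqP; apply: Hinj.
by rewrite !LmulE H0 mul0r'.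
Qed.

Lemma dim_le a b l : a != 0 -> is_idem mul a -> is_idem mul b ->
  (\dim (eigsp mul b l) <= \dim (eigsp mul (mul a b) l))%N.
Proof.
move=> Ha Hia Hib.
rewrite -(limg_dim_eq (f := Lmul mul a)); last by rewrite (Hred _ Ha Hia) capv0.
apply: dimvS; apply/subvP => v /memv_imgP [u Hu ->].
rewrite LmulE -(mul1r l); by apply: eig_prod => //; apply: idem_eig.
Qed.

End Helpers.

Theorem proposition4p2 (F : fieldType) (V : vectType F) (mul : V -> V -> V)
  (Hchar2 : 2%N \notin [pchar F]) (Hchar3 : 3%N \notin [pchar F])
  (Halg : comm_bilinear mul) (Hmed : medial mul) (Hred : reduced mul)
  (Hdim : (2 <= \dim (fullv : {vspace V}))%N)
  (c1 c2 : V) (Hc1 : c1 != 0) (Hc2 : c2 != 0)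
  (Hi1 : is_idem mul c1) (Hi2 : is_idem mul c2) :
  [/\ mul c1 c2 != 0 /\ is_idem mul (mul c1 c2),
      (forall (l1 l2 : F) (x y : V), x \in eigsp mul c1 l1 -> y \in eigsp mul c2 l2 ->
         mul x y \in eigsp mul (mul c1 c2) (l1 * l2)),
      (forall (l1 l2 : F) (x y : V), x \in eigsp mul c1 l1 -> y \in eigsp mul c1 l2 ->
         mul x y \in eigsp mul c1 (l1 * l2)),
      (forall l : F, in_spec mul c1 l || in_spec mul c2 l -> in_spec mul (mul c1 c2) l)
    & (forall l : F, in_spec mul c1 l ->
         (\dim (eigsp mul c1 l) <= \dim (eigsp mul (mul c2 c1) l))%N)
      /\ (forall l : F, in_spec mul c2 l ->
         (\dim (eigsp mul c2 l) <= \dim (eigsp mul (mul c1 c2) l))%N)].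
Proof.
split.
- split; first exact: mul_nz.
  by rewrite /is_idem Hmed Hi1 Hi2.
- by move=> l1 l2 x y; apply: eig_prod.
- move=> l1 l2 x y Hx Hy; rewrite -Hi1; exact: (@eig_prod _ _ _ Halg Hmed _ _ _ _ _ _ Hx Hy).
- move=> l /orP [] /(@specP _ _ mul _ _) [v Hv Hm]; apply/(@specP _ _ mul _ _).
  + exists (mul v c2).
      by rewrite (Halg.1 v c2); apply: mul_nz.
    rewrite -(mulr1 l); exact: (@eig_prod _ _ _ Halg Hmed _ _ _ _ _ _ Hm (@idem_eig _ _ _ Halg _ Hi2)).
  + exists (mul c1 v); first exact: mul_nz.
    rewrite -(mul1r l); exact: (@eig_prod _ _ _ Halg Hmed _ _ _ _ _ _ (@idem_eig _ _ _ Halg _ Hi1) Hm).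
- by split=> l _; apply: dim_le.
Qed.
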